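(* Let $S=\{(a_i,b_i)\}_{i=1}^n\subset\mathbb R_{>0}\times\mathbb R_{\ge0}$ with $0<a_1<\cdots<a_n$, and let $f\in\mathbb R_{\ge0}[X]$ interpolate $S$ (i.e. $f(a_i)=b_i$ for all $i$). (1) If $\mathfrak d(f)+1\le n$, then $f$ is the unique polynomial in $\mathbb R_{\ge0}[X]$ interpolating $S$. (2) If $n\le\mathfrak d(f)$, then there are infinitely many polynomials in $\mathbb R_{\ge0}[X]$ interpolating $S$.
   Context: $\mathbb R_{\ge0}[X]$ is the set of real polynomials all of whose coefficients are nonnegative (CMPs). A finite sign sequence is $s=(s_i)_{i\in\omega}\in\{-,0,+\}^\omega$ with finitely many nonzero entries ($\omega=\{0,1,2,\dots\}$); $\mathscr S$ is their set and $\mathscr S_+=\mathscr S\cap\{0,+\}^\omega$. For $f=\sum_i c_iX^i$, $\mathrm{Sign}(f)=(\operatorname{sign}(c_i))_{i\in\omega}$. $\mathrm{SC}(t)$ is the number of pairs $i<j$ with $\{t_i,t_j\}=\{-,+\}$ and $t_k=0$ for all $i<k<j$. For $s\in\mathscr S_+$, $\mathfrak d(s)=\max\{\mathrm{SC}(t): t\in\mathscr S,\ t_i\in\{-,0,s_i\}\ \forall i\in\omega\}$, and for $f\in\mathbb R_{\ge0}[X]$, $\mathfrak d(f)=\mathfrak d(\mathrm{Sign}(f))$. *)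

(* Defs.v *)
From HB Require Import structures.
From mathcomp Require Import all_boot all_order all_algebra.
From mathcomp Require Import boolp classical_sets cardinality reals.
From Stdlib Require Import ClassicalEpsilon.
Set Implicit Arguments. Unset Strict Implicit. Unset Printing Implicit Defensive.
Import Order.TTheory GRing.Theory Num.Theory.
Local Open Scope ring_scope.

(* Finite sign sequences are represented by seq int with entries in
   {-1, 0, 1}; position i of the sequence is t_i, entries beyond the size are 0. *)

Definition CMP (R : realType) (f : {poly R}) : Prop := forall i : nat, 0 <= f`_i.

Definition Sign (R : realType) (f : {poly R}) : seq int := [seq sgz c | c <- f].

Definition sgn_opp (x y : int) : bool :=
  ((x == -1) && (y == 1)) || ((x == 1) && (y == -1)).

Definition SC (t : seq int) : nat :=
  (\sum_(0 <= i < size t) \sum_(0 <= j < size t)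
    [&& (i < j)%N, sgn_opp (nth (0:int) t i) (nth (0:int) t j) &
        all (fun k => nth (0:int) t k == (0:int)) (iota i.+1 (j - i.+1))])%N.

Definition admissible (s t : seq int) : Prop :=
  forall i : nat, nth 0 t i \in [:: -1; 0; nth 0 s i].

Definition is_dmax (s : seq int) (d : nat) : Prop :=
  (exists t, admissible s t /\ SC t = d) /\
  (forall t, admissible s t -> (SC t <= d)%N).

(* 𝔡(s): the maximum (chosen classically; it exists for s in S_+). *)
Definition dfrak (s : seq int) : nat :=
  epsilon (inhabits 0%N) (fun d => is_dmax s d).

Definition dfrakP (R : realType) (f : {poly R}) : nat := dfrak (Sign f).

Definition interpolates (R : realType) (n : nat) (a b : 'I_n -> R) (f : {poly R}) : Prop :=
  forall i : 'I_n, f.[a i] = b i.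

(* Main.v *)
Require Import Defs.
From HB Require Import structures.
From mathcomp Require Import all_boot all_order all_algebra.
From mathcomp Require Import boolp classical_sets cardinality reals.
From mathcomp Require Import zify.
From mathcomp Require Import polyorder polyrcf.
From mathcomp Require Import lra.
From Stdlib Require Import ClassicalEpsilon.
Import Order.TTheory GRing.Theory Num.Theory.
Local Open Scope ring_scope.

Fixpoint fnz (s : seq int) : int :=
  if s is x :: s' then (if x != 0 then x else fnz s') else 0.
Fixpoint Vc (s : seq int) : nat :=
  if s is x :: s' then (sgn_opp x (fnz s') + Vc s')%N else 0%N.

Lemma all_iotaS (P : pred nat) m n :
  all P (iota m.+1 n) = all (fun k => P k.+1) (iota m n).
Proof. by elim: n m => [|n IH] m //=; rewrite IH. Qed.

Lemma sgn_opp0 x : sgn_opp x 0 = false.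
Proof. by rewrite /sgn_opp !andbF. Qed.
Lemma sgn_opp0l x : sgn_opp 0 x = false.
Proof. by rewrite /sgn_opp. Qed.

Lemma sumA (x : int) (t : seq int) :
  (\sum_(0 <= j < size t) (sgn_opp x (nth (0:int) t j) &&
      all (fun k => nth (0:int) t k == 0) (iota 0 j)))%N = sgn_opp x (fnz t).
Proof.
elim: t => [|y t IH]; first by rewrite big_geq //= sgn_opp0.
rewrite /= big_nat_recl //= andbT.
under eq_bigr => j _ do rewrite /= all_iotaS /=.
have [->|yn0] := eqVneq y 0.
  by rewrite IH /= sgn_opp0.
rewrite big1 ?addn0 // => j _; by rewrite andbF.
Qed.

Lemma SC_cons x t : SC (x :: t) = (sgn_opp x (fnz t) + SC t)%N.
Proof.
rewrite /SC /= big_nat_recl //= big_nat_recl //= add0n.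
rewrite -sumA; congr (_ + _)%N.
  apply: eq_bigr => j _; rewrite /= subn1 /= all_iotaS //.
apply: eq_bigr => i _; rewrite big_nat_recl //= add0n.
apply: eq_bigr => j _; rewrite /= ltnS subSS all_iotaS //.
Qed.

Lemma SC_Vc t : SC t = Vc t.
Proof.
elim: t => [|x t IH]; first by rewrite /SC big_geq.
by rewrite SC_cons IH.
Qed.


Definition nzc (s : seq int) : nat := count (fun x => x != 0) s.
Definition ent (x : int) : bool := x \in [:: -1; 0; 1].

Lemma entP (x : int) : ent x -> [\/ x = -1, x = 0 | x = 1].
Proof. by rewrite /ent !inE => /or3P[] /eqP ->; [apply: Or31|apply: Or32|apply: Or33]. Qed.

Lemma sgn_oppE (x y : int) : sgn_opp x y -> x = - y /\ x != 0.
Proof. by rewrite /sgn_opp => /orP[] /andP[/eqP -> /eqP ->]. Qed.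

Lemma sgn_opp_le (x y : int) : (sgn_opp x y <= (y != 0))%N.
Proof. by case: (boolP (sgn_opp x y)) => // /sgn_oppE [] ->; rewrite oppr_eq0 => ->. Qed.

Lemma F1 (u : seq int) : (Vc u + (fnz u != 0) <= nzc u)%N.
Proof.
elim: u => [|x u IH] //=; rewrite /nzc /=.
have [->|xn0] := eqVneq x 0; first by rewrite sgn_opp0l.
rewrite /= xn0 addn1 add1n ltnS; apply: leq_trans IH; rewrite addnC leq_add2l; exact: sgn_opp_le.
Qed.

Lemma fnz_eq0 (u : seq int) : (fnz u == 0) = (nzc u == 0%N).
Proof.
elim: u => [|x u IH] //=; rewrite /nzc /=.
have [->|xn0] := eqVneq x 0; first by rewrite /= IH.
by rewrite /= ?xn0 ?(negbTE xn0).
Qed.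

Lemma Vc_fnz0 (u : seq int) : fnz u = 0 -> Vc u = 0%N.
Proof. by move=> h; have := F1 u; move/eqP: h; rewrite fnz_eq0 => /eqP ->; rewrite leqn0 addn_eq0 => /andP[/eqP]. Qed.

Lemma F2 (u t : seq int) : all2 (fun x y => (y == 0) ==> (x == 0)) u t -> (nzc u <= nzc t)%N.
Proof.
elim: t u => [|y t IH] [|x u] //= /andP[h /IH]; rewrite /nzc /= => le.
have [y0|yn0] := eqVneq y 0.
  by move: h; rewrite y0 /= => /eqP ->; rewrite /= !add0n.
rewrite /= add1n; case: eqVneq => _ /=.
  by rewrite add0n (leq_trans le).
by rewrite add1n.
Qed.

Arguments F2 {u t}.

Lemma fnz_opp (t : seq int) : fnz (map -%R t) = - fnz t.
Proof. by elim: t => //= x t ->; rewrite oppr_eq0; case: eqVneq. Qed.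

Lemma sgn_oppN (x y : int) : sgn_opp (- x) (- y) = sgn_opp x y.
Proof. by rewrite /sgn_opp !eqr_oppLR !opprK orbC. Qed.

Lemma Vc_opp (t : seq int) : Vc (map -%R t) = Vc t.
Proof. by elim: t => //= x t ->; rewrite fnz_opp sgn_oppN. Qed.

Lemma nzc_opp (t : seq int) : nzc (map -%R t) = nzc t.
Proof. by rewrite /nzc count_map; apply: eq_count => x /=; rewrite oppr_eq0. Qed.

Lemma all0_eq (u t : seq int) : size u = size t -> nzc u = 0%N -> nzc t = 0%N -> u = t.
Proof.
elim: t u => [|y t IH] [|x u] //= [/IH h]; rewrite /nzc /=.
by case: eqVneq => // -> /= /h {}h; case: eqVneq => // -> /= /h ->.
Qed.

Arguments all0_eq {u t}.

Lemma nzc0 (u : seq int) : nzc (0 :: u) = nzc u.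
Proof. by rewrite /nzc /= ?eqxx. Qed.
Lemma nzcN (x : int) u : x != 0 -> nzc (x :: u) = (nzc u).+1.
Proof. by move=> h; rewrite /nzc /= h. Qed.
Lemma VcE (x : int) u : Vc (x :: u) = (sgn_opp x (fnz u) + Vc u)%N.
Proof. by []. Qed.
Lemma Vc0 (u : seq int) : Vc (0 :: u) = Vc u.
Proof. by rewrite VcE sgn_opp0l. Qed.

Lemma lemD (u t : seq int) :
  all2 (fun x y => (y == 0) ==> (x == 0)) u t -> all ent u -> all ent t ->
  (0 < nzc u)%N -> (nzc t <= Vc u + 1)%N -> (Vc t + 1 = nzc t)%N ->
  u = t \/ u = map -%R t.
Proof.
elim: t u => [|y t IH] [|x u] //.
rewrite [all2 _ _ _]/= [all _ (x :: u)]/= [all _ (y :: t)]/=.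
move=> /andP[hxy hs] /andP[ex eu] /andP[ey et].
have f2 := F2 hs.
have [y0|yn0] := eqVneq y 0.
  have x0 : x = 0 by move: hxy; rewrite y0 eqxx /= => /eqP.
  rewrite x0 y0 !nzc0 !Vc0 => h1 h2 h3.
  have [->|->] := IH u hs eu et h1 h2 h3; [by left|by right; rewrite /= oppr0].
have [x0|xn0] := eqVneq x 0.
  rewrite x0 nzc0 Vc0 (nzcN _ _ yn0) => h1 h2 _.
  have := F1 u; have hu : fnz u != 0 by rewrite fnz_eq0 -lt0n.
  rewrite hu => f1; have := leq_trans h2 (leq_trans f1 f2); by rewrite ltnn.
rewrite (nzcN _ _ yn0) (nzcN _ _ xn0) => _ h1 h2.
have [t0|tn0] := eqVneq (nzc t) 0%N.
  have u0 : nzc u = 0%N by apply/eqP; rewrite -leqn0 -t0.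
  have eqs := all0_eq (eqP (andP (etrans (esym (all2E _ _ _)) hs)).1) u0 t0.
  have mt : map -%R t = t by apply: all0_eq; rewrite ?size_map ?nzc_opp.
  rewrite -eqs in mt *; rewrite [map _ _]/= mt.
  by case/entP: ex xn0 => -> // _; case/entP: ey yn0 => -> // _; [left|right|right|left].
have un0 : nzc u != 0%N.
  apply: contraNneq tn0 => u0.
  move: h1; rewrite VcE (Vc_fnz0 u); last by apply/eqP; rewrite fnz_eq0 u0.
  have : fnz u = 0 by apply/eqP; rewrite fnz_eq0 u0.
  by move=> ->; rewrite sgn_opp0 => h; rewrite -leqn0 -ltnS.
have f1 := F1 u; have f1t := F1 t.
have hfu : (fnz u != 0) = true by rewrite fnz_eq0 un0.
have hft : (fnz t != 0) = true by rewrite fnz_eq0 tn0.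
rewrite hfu addn1 in f1. rewrite hft addn1 in f1t.
have ou : sgn_opp x (fnz u).
  case: (boolP (sgn_opp x (fnz u))) => // b; move: h1; rewrite VcE (negbTE b) add0n.
  by rewrite addn1 ltnS => h1; have := leq_trans (leq_trans f1 f2) h1; rewrite ltnn.
have ot : sgn_opp y (fnz t).
  case: (boolP (sgn_opp y (fnz t))) => // b; move: h2; rewrite VcE (negbTE b) add0n addn1.
  by move=> [] h2; move: f1t; rewrite h2 ltnn.
have IHh : (nzc t <= Vc u + 1)%N.
  by move: h1; rewrite VcE ou add1n addn1 ltnS addn1.
have h2' : (Vc t + 1 = nzc t)%N by move: h2; rewrite VcE ot add1n addn1 => [[]] <-; rewrite addn1.
have hu0 : (0 < nzc u)%N by rewrite lt0n.
have [eq|eq] := IH u hs eu et hu0 IHh h2'.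
- subst; left; case/sgn_oppE: ou => -> _; case/sgn_oppE: ot => -> _; by [].
- subst; right; move: ou; rewrite fnz_opp => /sgn_oppE [-> _]; case/sgn_oppE: ot => -> _.
  by [].
Qed.


Fixpoint pickz (k : nat) (prev : int) (t : seq int) : seq int :=
  if t is x :: t' then
    if [&& x != 0, x != prev & (0 < k)%N] then x :: pickz k.-1 x t'
    else 0 :: pickz k prev t'
  else [::].

Fixpoint Bc (prev : int) (t : seq int) : nat :=
  if t is x :: t' then
    if (x != 0) && (x != prev) then (Bc x t').+1 else Bc prev t'
  else 0.

Lemma fnz0 (u : seq int) : fnz (0 :: u) = fnz u.
Proof. by []. Qed.
Lemma fnzN (x : int) u : x != 0 -> fnz (x :: u) = x.
Proof. by move=> h; rewrite /= h. Qed.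

Lemma pickzE k p x t : pickz k p (x :: t) =
  if [&& x != 0, x != p & (0 < k)%N] then x :: pickz k.-1 x t else 0 :: pickz k p t.
Proof. by []. Qed.

Lemma size_pick k p t : size (pickz k p t) = size t.
Proof. by elim: t k p => //= x t IH k p; case: ifP => _ /=; rewrite IH. Qed.

Lemma nth_pick k p t j : nth 0 (pickz k p t) j = 0 \/ nth 0 (pickz k p t) j = nth 0 t j.
Proof.
elim: t k p j => [|x t IH] k p j; first by rewrite nth_nil; left.
by rewrite pickzE; case: ifP => _; case: j => [|j] /=; auto.
Qed.

Lemma ent0 : ent 0.
Proof. by rewrite /ent !inE eqxx orbT. Qed.

Lemma ent_fnz t : all ent t -> ent (fnz t).
Proof.
elim: t => [|x t IH] /=; first by move=> _; exact: ent0.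
by case/andP => ex et; case: ifP => // _; apply: IH.
Qed.

Lemma fnz_pick k p t : all ent t ->
  fnz (pickz k p t) = 0 \/ (fnz (pickz k p t) != p /\ ent (fnz (pickz k p t))).
Proof.
elim: t k p => [|x t IH] k p; first by move=> _; left.
move=> /andP[ex et]; rewrite pickzE; case: ifP.
  by case/and3P => xn0 xp _; rewrite fnzN //; right.
by move=> _; rewrite fnz0; apply: IH.
Qed.

Lemma BcE p x t : Bc p (x :: t) =
  if (x != 0) && (x != p) then (Bc x t).+1 else Bc p t.
Proof. by []. Qed.

Lemma nzc_pick k p t : nzc (pickz k p t) = minn k (Bc p t).
Proof.
elim: t k p => [|x t IH] k p; first by rewrite /= minn0.
rewrite pickzE BcE andbA; case: (boolP ((x != 0) && (x != p))) => h.
  case: k => [|k].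
    by rewrite andbF nzc0 IH !min0n.
  by case/andP: h => xn0 xp; rewrite andbT nzcN // IH minnSS.
by rewrite nzc0 IH.
Qed.

Lemma opp_ent (x z : int) : ent x -> ent z -> x != 0 -> z != x ->
  sgn_opp x z = (z != 0).
Proof. by case/entP => ->; case/entP => ->. Qed.

Lemma Vc_pick k p t : all ent t ->
  (Vc (pickz k p t) + (fnz (pickz k p t) != 0) = nzc (pickz k p t))%N.
Proof.
elim: t k p => [|x t IH] k p //; rewrite [all _ _]/= => /andP[ex et]; rewrite pickzE.
case: ifP => [/and3P[xn0 xnp _]|_].
  rewrite VcE fnzN // nzcN // xn0 -IH // addn1 addnC; congr (_.+1); congr (_ + _)%N.
  case: (fnz_pick k.-1 x t et) => [->|[h1 h2]]; first by rewrite sgn_opp0 eqxx.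
  by rewrite opp_ent.
by rewrite Vc0 fnz0 nzc0 IH.
Qed.

Lemma Bc_Vc p t : all ent t -> ent p ->
  Bc p t = (Vc t + ((fnz t != 0) && (fnz t != p)))%N.
Proof.
elim: t p => [|x t IH] p; first by [].
rewrite [all _ _]/= => /andP[ex et] ep; rewrite BcE VcE.
have [x0|xn0] := eqVneq x 0.
  by rewrite x0 fnz0 sgn_opp0l add0n /= IH.
have key : sgn_opp x (fnz t) = (fnz t != 0) && (fnz t != x).
  have := ent_fnz t et.
  by case/entP: ex xn0 => -> // _ /entP [] ->.
rewrite fnzN // xn0 /=.
have [xp|xnp] := eqVneq x p.
  by rewrite /= -xp IH // key addn0 addnC.
by rewrite /= IH // key addn1 addnC.
Qed.


Section Desc.
Variable R : realType.
Implicit Types p q g : {poly R}.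

Lemma size_Sign p : size (Sign p) = size p.
Proof. by rewrite /Sign size_map. Qed.

Lemma nth_Sign p i : nth 0 (Sign p) i = sgz p`_i.
Proof.
rewrite /Sign; case: (ltnP i (size p)) => h; first by rewrite (nth_map 0).
by rewrite !nth_default ?size_map // sgz0.
Qed.

Lemma sgz_mulrn (x : R) n : sgz (x *+ n.+1) = sgz x.
Proof. by rewrite -mulr_natr sgzM [sgz (_%:R)]gtr0_sgz ?mulr1 // ltr0Sn. Qed.

Lemma Sign_cons p : p != 0 -> Sign p = sgz p`_0 :: Sign p^`().
Proof.
move=> pn0; apply: (@eq_from_nth _ 0).
  rewrite /= !size_Sign size_deriv prednK // lt0n size_poly_eq0 //.
case=> [|i] _; first by rewrite nth_Sign.
by rewrite /= !nth_Sign coef_deriv sgz_mulrn.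
Qed.

Lemma Sign_MX q : q != 0 -> Sign (q * 'X) = 0 :: Sign q.
Proof. by move=> qn0; rewrite /Sign polyseqMX //= sgz0. Qed.

Lemma all_ent_Sign p : all ent (Sign p).
Proof.
apply/allP => x /mapP [c _ ->]; rewrite /ent !inE.
by case: sgzP => _; rewrite eqxx ?orbT.
Qed.

Lemma fnz_Sign_neq0 p : p != 0 -> fnz (Sign p) != 0.
Proof.
move=> pn0; rewrite fnz_eq0 /nzc /Sign count_map -lt0n -has_count.
apply/hasP; exists (lead_coef p); first by rewrite /lead_coef mem_nth // ltn_predL lt0n size_poly_eq0.
by rewrite /= sgz_eq0 lead_coef_eq0.
Qed.

Lemma coef0_decomp p : p`_0 = 0 -> p != 0 ->
  exists2 q, q != 0 & (p = q * 'X /\ (size q < size p)%N).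
Proof.
move=> p0 pn0; pose q := \poly_(i < (size p).-1) p`_i.+1.
have pE : p = q * 'X.
  apply/polyP => i; rewrite coefMX; case: i => [|i] //=.
  rewrite coef_poly; case: ltnP => // h.
  by rewrite nth_default // (leq_trans (leqSpred _)) // ltnS.
exists q; first by apply: contraNneq pn0 => q0; rewrite pE q0 mul0r.
split => //; apply: (leq_ltn_trans (size_poly _ _)).
by rewrite ltn_predL lt0n size_poly_eq0.
Qed.

Lemma root_lemma g c : 0 < c -> (fnz (Sign g))%:~R * g.[c] < 0 ->
  exists x, [/\ 0 < x, x < c & root g x].
Proof.
move=> c0; move: {2}(size g) (leqnn (size g)) => n; elim: n g => [|n IH] g.
  rewrite leqn0 size_poly_eq0 => /eqP ->; by rewrite horner0 mulr0 ltxx.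
move=> sz h.
have gn0 : g != 0 by apply: contraTneq h => ->; rewrite horner0 mulr0 ltxx.
have [g0|g0] := eqVneq g`_0 0.
  have [q qn0 [gE szq]] := coef0_decomp g g0 gn0.
  move: h; rewrite gE Sign_MX // fnz0 hornerMX mulrA pmulr_llt0 // => h.
  have [|x [x0 xc rx]] := IH q _ h; first by rewrite -ltnS (leq_trans szq).
  by exists x; split => //; rewrite rootE hornerMX (eqP rx) mul0r.
move: h; rewrite Sign_cons // fnzN ?sgz_eq0 // -sgrEz => h.
have hp : g.[0] * g.[c] < 0.
  rewrite horner_coef0; have : 0 < `|g`_0| by rewrite normr_gt0.
  by move=> hn; rewrite [g`_0]numEsg mulrAC pmulr_llt0.
have [x /andP[] ] := poly_ivtoo (ltW c0) hp.
rewrite !bnd_simp => x0 xc rx; by exists x.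
Qed.

Lemma path_lt_weak (c z : R) s : path <%R z s -> c < z -> path <%R c s.
Proof. by case: s => //= d s /andP[zd ->]; rewrite andbT => cz; apply: lt_trans zd. Qed.

Lemma rolle_list p y s : path <%R y s -> root p y -> all (root p) s ->
  exists s', [/\ size s' = size s, path <%R y s' & all (root p^`()) s'].
Proof.
elim: s y => [|z s IH] y; first by exists [::].
rewrite /= => /andP[yz pz] ry /andP[rz rs].
have [s' [h1 h2 h3]] := IH z pz rz rs.
have [c /andP[] ] := @poly_rolle _ _ _ p yz (etrans (eqP ry) (esym (eqP rz))).
rewrite !bnd_simp => yc cz p'c.
exists (c :: s'); split => /=; first by rewrite h1.
  by rewrite yc; apply: path_lt_weak h2 cz.
by rewrite rootE p'c eqxx.
Qed.

Theorem descartes p s : p != 0 -> path <%R 0 s -> all (root p) s ->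
  (size s <= Vc (Sign p))%N.
Proof.
move: {2}(size p) (leqnn (size p)) => n; elim: n p s => [|n IH] p s.
  by rewrite leqn0 size_poly_eq0 => /eqP ->; rewrite eqxx.
move=> sz pn0 ps rs.
have [p0|p0] := eqVneq p`_0 0.
  have [q qn0 [pE szq]] := coef0_decomp p p0 pn0.
  rewrite pE Sign_MX // Vc0; apply: IH => //; first by rewrite -ltnS (leq_trans szq).
  apply/allP => x xs; have := allP rs x xs; rewrite pE !rootE hornerMX mulf_eq0 => /orP[] //.
  have : 0 < x by move: ps xs => /(order_path_min lt_trans) /allP h /h.
  by move=> /gt_eqF ->.
case: s ps rs => [|r s] //= /andP[r0 ps] /andP[rr rs].
have p'n0 : p^`() != 0.
  apply: contraNneq p0 => p'0.
  have : (size p <= 1)%N by have := size_deriv p; rewrite p'0 size_poly0; case: (size p) => [|[|k]].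
  by move=> /size1_polyC pE; move: rr; rewrite pE rootC coefC.
have szd : (size p^`() <= n)%N by rewrite -ltnS (leq_trans (lt_size_deriv pn0)).
have [s' [hs1 hs2 hs3]] := rolle_list p r s ps rr rs.
rewrite Sign_cons // VcE.
case: (boolP (sgn_opp (sgz p`_0) (fnz (Sign p^`())))) => hop.
  rewrite add1n ltnS -hs1; apply: IH => //; exact: path_lt_weak _ _ _ hs2 r0.
rewrite add0n.
have [c /andP[] ] := poly_mvt p r0.
rewrite !bnd_simp => c0 cr.
rewrite (eqP rr) horner_coef0 subr0 sub0r => hc.
have hf : fnz (Sign p^`()) = sgz p`_0.
  have e1 := ent_fnz _ (all_ent_Sign p^`()).
  have e2 : ent (sgz p`_0) by rewrite /ent !inE; case: sgzP => _; rewrite eqxx ?orbT.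
  have n1 := fnz_Sign_neq0 _ p'n0. have n2 : sgz p`_0 != 0 by rewrite sgz_eq0.
  move: hop; case/entP: e1 n1 => -> // _; case/entP: e2 n2 => -> // _.
have [x [x0 xc rx]] : exists x, [/\ 0 < x, x < c & root p^`() x].
  apply: root_lemma => //; rewrite hf -sgrEz.
  have : - p`_0 = p^`().[c] * r by rewrite -hc.
  move=> /(congr1 (fun z => z / r)); rewrite mulrK ?unitfE ?gt_eqF // => <-.
  by rewrite mulrA mulrN -normrEsg mulNr oppr_lt0 divr_gt0 // normr_gt0.
suff : (size (x :: s') <= Vc (Sign p^`()))%N by rewrite /= hs1.
apply: IH => //=; rewrite ?rx ?x0 //.
apply: path_lt_weak _ _ _ hs2 _; exact: lt_trans xc cr.
Qed.
End Desc.


Lemma all2_nth (P : int -> int -> bool) (u t : seq int) : size u = size t ->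
  (forall j, P (nth 0 u j) (nth 0 t j)) -> all2 P u t.
Proof.
elim: u t => [|x u IH] [|y t] //= [sz] h.
by rewrite (h 0%N) /=; apply: IH => // j; apply: (h j.+1).
Qed.

Lemma all_ent_nth (l : seq int) : (forall j, ent (nth 0 l j)) -> all ent l.
Proof.
elim: l => [|x l IH] //= h; rewrite (h 0%N) /=; apply: IH => j; exact: (h j.+1).
Qed.

Lemma nth_cat0 (l : seq int) k j : nth 0 (l ++ nseq k 0) j = nth 0 l j.
Proof.
rewrite nth_cat; case: ltnP => // h; rewrite nth_nseq nth_default //.
by case: ifP.
Qed.

Lemma fnz_nseq0 k : fnz (nseq k 0) = 0.
Proof. by elim: k. Qed.

Lemma fnz_cat0 (l : seq int) k : fnz (l ++ nseq k 0) = fnz l.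
Proof. elim: l => [|x l IH] /=; [exact: fnz_nseq0|by rewrite IH]. Qed.

Lemma Vc_cat0 (l : seq int) k : Vc (l ++ nseq k 0) = Vc l.
Proof.
elim: l => [|x l IH]; first by apply: Vc_fnz0; exact: fnz_nseq0.
by rewrite cat_cons !VcE fnz_cat0 IH.
Qed.

Lemma nzc_cat0 (l : seq int) k : nzc (l ++ nseq k 0) = nzc l.
Proof. by rewrite /nzc count_cat count_nseq eqxx /= mul0n addn0. Qed.

Lemma nth_opp (t : seq int) j : nth 0 (map -%R t) j = - nth 0 t j.
Proof.
case: (ltnP j (size t)) => h; first by rewrite (nth_map 0).
by rewrite !nth_default ?size_map // oppr0.
Qed.


Lemma count1_le (s t : seq int) : admissible s t -> (count (fun x => x == (1:int)) t <= size s)%N.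
Proof.
move=> ad; rewrite -(cat_take_drop (size s) t) count_cat.
have -> : count (fun x => x == (1:int)) (drop (size s) t) = 0%N.
  apply/eqP; rewrite -leqn0 leqNgt -has_count; apply/negP => /hasP [x].
  move=> /(nthP 0) [k kl <-]; rewrite nth_drop.
  have := ad (size s + k)%N; rewrite [nth _ s _]nth_default ?leq_addr //.
  by rewrite !inE => /or3P[] /eqP ->.
by rewrite addn0 (leq_trans (count_size _ _)) // size_take; case: ltnP => // /ltnW.
Qed.

Lemma Vc_bound (t : seq int) :
  (Vc t + (fnz t == 1) <= 2 * count (fun x => x == (1:int)) t)%N.
Proof.
elim: t => [|x t IH] //; rewrite VcE.
have [->|xn0] := eqVneq x 0.
  by rewrite sgn_opp0l add0n fnz0 /= add0n.
rewrite fnzN //= -/(count _ t).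
set z := fnz t in IH *.
case: (boolP (x == 1)) => [/eqP x1|xn1].
  rewrite x1 /= mulnDr muln1.
  have h2 : ((z == (-1)%R) + (z == 1%R) <= 1)%N.
    by case: (eqVneq z 1) => [->|]; rewrite ?addn0 ?leq_b1.
  have -> : sgn_opp 1 z = (z == -1) by rewrite /sgn_opp eqxx /=.
  move: h2 IH; set a := nat_of_bool _; set b := nat_of_bool _.
  set v := Vc t; set c := count _ t; clearbody a b v c => h2 IH.
  lia.
have h : (sgn_opp x z <= (z == 1))%N.
  by rewrite /sgn_opp (negbTE xn1) /= orbF; case: (x == -1).
rewrite /= add0n addn0.
move: h IH; set a := nat_of_bool (sgn_opp x z); set b := nat_of_bool (z == 1).
set v := Vc t; set c := count _ t; clearbody a b v c; lia.
Qed.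

Lemma adm_nil s : admissible s [::].
Proof. by move=> i; rewrite nth_nil !inE eqxx orbT. Qed.

Lemma dfrak_spec s : is_dmax s (dfrak s).
Proof.
rewrite /dfrak; apply: epsilon_spec.
pose pb := fun d => `[< exists t, admissible s t /\ SC t = d >].
have ex0 : exists d, pb d by exists 0%N; apply/asboolP; exists [::]; split; [exact: adm_nil|rewrite SC_Vc].
have ub : forall d, pb d -> (d <= 2 * size s)%N.
  move=> d /asboolP [t [ad <-]]; rewrite SC_Vc.
  apply: leq_trans (leq_trans (leq_addr _ _) (Vc_bound t)) _.
  by rewrite leq_mul2l count1_le.
have [d pd dmax] := ex_maxnP ex0 ub.
exists d; split; first exact/asboolP.
by move=> t ad; apply: dmax; apply/asboolP; exists t.
Qed.

Lemma roots_desc (R : realType) n (a : 'I_n -> R) (h : {poly R}) :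
  (forall i, 0 < a i) -> (forall i j : 'I_n, (i < j)%N -> a i < a j) ->
  (forall i, h.[a i] = 0) -> h != 0 -> (n <= Vc (Sign h))%N.
Proof.
move=> apos amono hr hn0.
have ainj : injective a.
  move=> i j e; have [ij|ji|/val_inj //] := ltngtP i j.
    by move: (amono _ _ ij); rewrite e ltxx.
  by move: (amono _ _ ji); rewrite e ltxx.
set l := map a (enum 'I_n).
have ul : uniq l by rewrite map_inj_uniq ?enum_uniq.
set s := sort <=%R l.
have -> : n = size s by rewrite size_sort size_map size_enum_ord.
apply: descartes => //.
  rewrite path_sortedE; last exact: lt_trans.
  apply/andP; split.
    by apply/allP => x; rewrite mem_sort => /mapP [i _ ->].
  by rewrite lt_sorted_uniq_le sort_uniq ul sort_sorted //; exact: le_total.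
apply/allP => x; rewrite mem_sort => /mapP [i _ ->]; exact/eqP.
Qed.

Lemma part1 (R : realType) (n : nat) (a b : 'I_n -> R) (f : {poly R}) :
  (forall i : 'I_n, 0 < a i) ->
  (forall i j : 'I_n, (i < j)%N -> a i < a j) ->
  CMP f -> interpolates a b f ->
  (dfrakP f + 1 <= n)%N ->
     forall g : {poly R}, CMP g -> interpolates a b g -> g = f.
Proof.
move=> apos amono cf itf hd g cg itg.
have [//|ne] := eqVneq g f.
have hn0 : f - g != 0 by rewrite subr_eq0 eq_sym.
have hr : forall i, (f - g).[a i] = 0 by move=> i; rewrite hornerD hornerN itf itg subrr.
have h1 := roots_desc _ _ _ _ apos amono hr hn0.
have ad : admissible (Sign f) (Sign (f - g)).
  move=> i; rewrite !nth_Sign coefB !inE.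
  have := cf i; rewrite le_eqVlt => /orP[/eqP f0|fp].
    rewrite -f0 sub0r sgzN sgz0; have := cg i; rewrite le_eqVlt => /orP[/eqP <-|gp].
      by rewrite sgz0 oppr0 eqxx orbT.
    by rewrite gtr0_sgz // eqxx.
  by rewrite (gtr0_sgz fp); case: sgzP => _; rewrite eqxx ?orbT.
have := (dfrak_spec (Sign f)).2 _ ad; rewrite SC_Vc -/(dfrakP f) => h2.
by have := leq_trans hd (leq_trans h1 h2); rewrite addn1 ltnn.
Qed.


Lemma eps_exists (R : realType) (f q : {poly R}) :
  CMP f -> (forall j, 0 < q`_j -> 0 < f`_j) ->
  exists2 e : R, 0 < e & forall j, e * q`_j <= f`_j.
Proof.
move=> cf hq.
suff [e e0 he] : exists2 e : R, 0 < e & forall j, (j < size q)%N -> e * q`_j <= f`_j.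
  exists e => // j; case: (ltnP j (size q)) => hj; first exact: he.
  by rewrite nth_default // mulr0; apply: cf.
elim: (size q) => [|N [e e0 he]]; first by exists 1.
have mono : forall e' j, 0 < e' -> e' <= e -> (j < N)%N -> e' * q`_j <= f`_j.
  move=> e' j e'0 e'e jN; have := he j jN; have := cf j.
  have [qj0|qj0] := leP (q`_j) 0; nra.
have [qN|qN] := ltP 0 (q`_N).
  have fN := hq _ qN.
  exists (Num.min e (f`_N / q`_N)); first by rewrite lt_min e0 divr_gt0.
  move=> j; rewrite ltnS leq_eqVlt => /orP[/eqP ->|jN].
    by rewrite -ler_pdivlMr // ge_min lexx orbT.
  by apply: mono => //; [rewrite lt_min e0 divr_gt0|rewrite ge_min lexx].
exists e => // j; rewrite ltnS leq_eqVlt => /orP[/eqP ->|jN]; last exact: he.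
by have := cf N; nra.
Qed.

Section InfSec.
Local Open Scope classical_set_scope.

Lemma infinite_from_q (R : realType) (n : nat) (a b : 'I_n -> R) (f q : {poly R}) :
  CMP f -> interpolates a b f -> q != 0 -> (forall i, q.[a i] = 0) ->
  (forall j, 0 < q`_j -> 0 < f`_j) ->
  infinite_set [set g : {poly R} | CMP g /\ interpolates a b g].
Proof.
move=> cf itf qn0 qr hq.
have [e e0 he] := eps_exists _ _ _ cf hq.
pose ek (k : nat) : R := e / k.+1%:R.
have ek0 k : 0 < ek k by rewrite /ek divr_gt0 // ltr0Sn.
have eke k : ek k <= e.
  rewrite /ek ler_pdivrMr ?ltr0Sn //; have : (1:R) <= k.+1%:R by rewrite ler1n.
  by move=> h; nra.
pose F k := f - ek k *: q.
have injF : injective F.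
  move=> k k'; rewrite /F => /addrI /oppr_inj /eqP.
  rewrite -subr_eq0 -scalerBl scaler_eq0 (negbTE qn0) orbF.
  rewrite subr_eq0 /ek => /eqP /(mulfI (lt0r_neq0 e0)) /invr_inj /eqP.
  by rewrite eqr_nat => /eqP [].
have sub : F @` setT `<=` [set g : {poly R} | CMP g /\ interpolates a b g].
  move=> _ [k _ <-]; split.
    move=> j; rewrite coefB coefZ; have := he j; have := ek0 k; have := eke k; have := cf j.
    have [qj0|qj0] := leP (q`_j) 0; nra.
  by move=> i; rewrite /F hornerD hornerN hornerZ qr mulr0 subr0 itf.
move=> fin; apply: infinite_nat.
have := sub_finite_set sub fin.
by rewrite (eq_finite_set (inj_card_eq (in2W injF))).
Qed.
End InfSec.


Lemma ent_sgz (R : realType) (x : R) : ent (sgz x).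
Proof. by rewrite /ent !inE; case: sgzP => _; rewrite eqxx ?orbT. Qed.

Lemma q_exists (R : realType) (n : nat) (a : 'I_n -> R) (f : {poly R}) :
  (0 < n)%N -> (forall i, 0 < a i) -> (forall i j : 'I_n, (i < j)%N -> a i < a j) ->
  (n <= dfrakP f)%N ->
  exists q : {poly R}, [/\ q != 0, (forall i, q.[a i] = 0) &
                           (forall j, 0 < q`_j -> 0 < f`_j)].
Proof.
move=> n0 apos amono nd.
have [[t [ad SCt]] _] := dfrak_spec (Sign f).
rewrite SC_Vc -/(dfrakP f) in SCt.
have entt : all ent t.
  apply: all_ent_nth => j; have := ad j; rewrite nth_Sign /ent !inE.
  by case/or3P => /eqP ->; rewrite ?eqxx ?orbT //; have := ent_sgz _ f`_j; rewrite /ent !inE.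
set ts := pickz n.+1 0 t.
have fnzt : fnz t != 0.
  apply/negP => /eqP /Vc_fnz0 V0; move: nd; rewrite -SCt V0 leqn0 => /eqP n00.
  by move: n0; rewrite n00.
have Bt : Bc 0 t = (Vc t).+1 by rewrite Bc_Vc // ?ent0 // fnzt addn1.
have nzts : nzc ts = n.+1.
  by rewrite /ts nzc_pick Bt; apply/minn_idPl; rewrite ltnS SCt.
have entts : all ent ts.
  apply: all_ent_nth => j; case: (nth_pick n.+1 0 t j); rewrite -/ts => ->; first exact: ent0.
  case: (ltnP j (size t)) => h; first by apply: (allP entt); rewrite mem_nth.
  by rewrite nth_default //; exact: ent0.
have fnzts : fnz ts != 0 by rewrite fnz_eq0 nzts.
have Vts : Vc ts = n.
  by have := Vc_pick n.+1 0 t entt; rewrite -/ts fnzts nzts addn1 => [[]].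
set N := size ts.
set J := [seq j <- iota 0 N | nth 0 ts j != 0].
have szJ : size J = n.+1.
  rewrite size_filter -nzts /nzc -{2}(mkseq_nth 0 ts) /mkseq count_map //.
have uJ : uniq J by rewrite filter_uniq ?iota_uniq.
have memJ j : (j \in J) = (j < N)%N && (nth 0 ts j != 0).
  by rewrite mem_filter mem_iota add0n andbC.
pose A : 'M[R]_(n.+1, n) := \matrix_(k, i) a i ^+ (nth 0%N J k).
have nfree : ~~ row_free A.
  rewrite /row_free; apply/negP => /eqP h; have := rank_leq_col A; rewrite h ltnn.
  by [].
have [v vK vn0] : exists2 v : 'rV[R]_(n.+1), v *m A = 0 & v != 0.
  have : kermx A != 0 by rewrite kermx_eq0.
  by case/rowV0Pn => v /sub_kermxP h vn; exists v.
case/rV0Pn: (vn0) => k0 vk0.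
pose q := \sum_(k < n.+1) v 0 k *: 'X^(nth 0%N J k).
have qcoef j : q`_j = \sum_(k < n.+1 | nth 0%N J k == j) v 0 k by rewrite coef_sumMXn.
have qJ : q`_(nth 0%N J k0) = v 0 k0.
  rewrite qcoef (big_pred1 k0) // => k; rewrite /= (nth_uniq 0%N) ?szJ //.
have qnJ j : j \notin J -> q`_j = 0.
  move=> hj; rewrite qcoef big1 // => k /eqP e; move: hj; by rewrite -e mem_nth // szJ.
have qn0 : q != 0 by apply: contraNneq vk0 => q0; rewrite -qJ q0 coef0.
have qr i : q.[a i] = 0.
  have := congr1 (fun M : 'M[R]_(1, n) => M 0 i) vK; rewrite !mxE => <-.
  rewrite horner_sum; apply: eq_bigr => k _; by rewrite hornerZ hornerXn mxE.
have Vq := roots_desc _ _ _ _ apos amono qr qn0.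
have szq : (size q <= N)%N.
  apply/leq_sizeP => j hj; apply: qnJ; by rewrite memJ ltnNge hj.
set us := Sign q ++ nseq (N - size q) 0.
have nthus j : nth 0 us j = sgz q`_j by rewrite nth_cat0 nth_Sign.
have szus : size us = N by rewrite size_cat size_Sign size_nseq subnKC.
have fin : forall j, nth 0 ts j = 1 -> 0 < f`_j.
  move=> j h1; have htj : nth 0 t j = 1.
    case: (nth_pick n.+1 0 t j); rewrite -/ts h1; last by move=> ->.
    by move/eqP; rewrite oner_eq0.
  have := ad j; rewrite htj nth_Sign !inE => /or3P[] //.
  by move=> /eqP h; rewrite -sgz_gt0 -h.
have [E|E] : us = ts \/ us = map -%R ts.
  apply: lemD.
  - apply: all2_nth; first by rewrite szus.
    move=> j; rewrite nthus; apply/implyP => /eqP tj.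
    by rewrite qnJ ?sgz0 // memJ tj eqxx andbF.
  - apply: all_ent_nth => j; rewrite nthus; exact: ent_sgz.
  - exact: entts.
  - rewrite /us nzc_cat0 lt0n -fnz_eq0; exact: fnz_Sign_neq0.
  - by rewrite nzts /us Vc_cat0 addn1 ltnS.
  - by rewrite Vts nzts addn1.
- exists q; split => // j qj; apply: fin.
  by rewrite -E nthus gtr0_sgz.
- exists (- q); split => //; first by rewrite oppr_eq0.
    by move=> i; rewrite hornerN qr oppr0.
  move=> j; rewrite coefN oppr_gt0 => qj; apply: fin.
  by apply: oppr_inj; rewrite -nth_opp -E nthus ltr0_sgz.
Qed.

Local Open Scope classical_set_scope.

Theorem mainTheorem3 (R : realType) (n : nat) (a b : 'I_n -> R) (f : {poly R}) :
  (forall i : 'I_n, 0 < a i) ->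
  (forall i : 'I_n, 0 <= b i) ->
  (forall i j : 'I_n, (i < j)%N -> a i < a j) ->
  CMP f -> interpolates a b f ->
  ((dfrakP f + 1 <= n)%N ->
     forall g : {poly R}, CMP g -> interpolates a b g -> g = f) /\
  ((n <= dfrakP f)%N ->
     infinite_set [set g : {poly R} | CMP g /\ interpolates a b g]).
Proof.
move=> apos _ amono cf itf; split; first exact: part1.
move=> nd.
have [q [qn0 qr qf]] : exists q : {poly R}, [/\ q != 0, (forall i, q.[a i] = 0) &
                           (forall j, 0 < q`_j -> 0 < f`_j)].
  case: n a b apos amono itf nd => [|n] a b apos amono itf nd.
    exists (-1); split; first by rewrite oppr_eq0 oner_eq0.
      by move=> [].
    by move=> j; rewrite coefN coef1 oppr_gt0 ltNge ler0n.
  exact: q_exists.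
exact: (infinite_from_q _ _ _ _ _ _ cf itf qn0 qr qf).
Qed.
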